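(* In the screening cohort model described in the context, for a screening policy $h\in\{S,NS\}^J$, the expected total number of life years left $T_h$ of the cohort, measured at the beginning, is $$ \mathbb{E} T_h = \sum_{j=2}^J 2N_j + \sum_{j=1}^J \left[\lambda_{j,-1}(1)\,\mu_{j,h}(-1) + \sum_{k=0}^K \mu_{j,h}(k)\,\mathbb{E} T_{j,k}\right]N_j, $$ where $\mathbb{E} T_{j,k} = \sum_{t=0}^\infty t\,\lambda_{j,k}(t)$.
   Context: Model of a cohort of women undergoing (biennial) breast cancer screening. Age groups (screening rounds, two years apart) are indexed by $j=1,\dots,J$. A policy is $h=[h(1),\dots,h(J)]\in\{S,NS\}^J$, where $h(j)=S$ means age group $j$ is screened and $NS$ means not screened. At round $j$, an individual's observed state is a random variable $X_{j,h}\in\{-1,0,1,\dots,K\}$, where $-1$ means no breast cancer diagnosed and $k=0,\dots,K$ are diagnosed cancer stages; its distribution $\mu_{j,h}(k)=P(X_{j,h}=k)$ depends only on $j$ and $h(j)$ (not on the individual). For an individual of age group $j$ in state $k$, the time to death (in years, a nonnegative integer) is $T_{j,k}$ with distribution $\lambda_{j,k}(t)=P(T_{j,k}=t)$, independent of the individual. $T_j$ denotes the time to death of an individual at age group $j$ regardless of state, with $P(T_j=t)=\sum_{k=-1}^K \lambda_{j,k}(t)\mu_{j,h}(k)$. Individuals leave the screening population when they die or are diagnosed with breast cancer. The cohort starts with $N_1=N_0$ individuals, and the number invited at round $j+1$ is $N_{j+1}=N_j\big(1-P(T_j\in\{0,1\})-P(T_j\ge 2, X_{j,h}\ne -1)\big)$.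 Life-year accounting: each individual present at round $j\ge 2$ contributes the two years lived between rounds $j-1$ and $j$; at round $j$, an undiagnosed individual (state $-1$) who lives only one more year contributes one year; an individual diagnosed at round $j$ in stage $k\ge 0$ contributes $T_{j,k}$ further years. $T_h$ denotes the total number of life years of the cohort counted in this way under policy $h$. *)

(* Defs.v *)
From HB Require Import structures.
From mathcomp Require Import all_boot all_order all_algebra.
From mathcomp Require Import all_classical all_reals all_analysis.
Set Implicit Arguments. Unset Strict Implicit. Unset Printing Implicit Defensive.
Import Order.TTheory GRing.Theory Num.Theory.
Local Open Scope ring_scope.

(* Observed state at a round: None = -1 (no cancer diagnosed),
   Some k = diagnosed stage k, k = 0..K. *)
Definition state (K : nat) := option 'I_K.+1.

(* A policy h : nat -> bool, h j = true means S (screened), false means NS.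
   mu j b x = P(X_{j,h} = x) when h j = b.
   lam j x t = P(T_{j,x} = t). *)
Section Model.
Variables (R : realType) (K : nat).
Variables (mu : nat -> bool -> state K -> R) (lam : nat -> state K -> nat -> R).
Variables (h : nat -> bool).

Definition P_T01 (j : nat) : R :=
  \sum_(x : state K) mu j (h j) x * (lam j x 0%N + lam j x 1%N).

Definition P_T2_diag (j : nat) : R :=
  fine (\sum_(k < K.+1) ((mu j (h j) (Some k))%:E *
          \sum_(2 <= t <oo) (lam j (Some k) t)%:E))%E.

(* cohortN N0 n = N_{n+1} *)
Fixpoint cohortN (N0 : R) (n : nat) : R :=
  match n with
  | 0%N => N0
  | n'.+1 => cohortN N0 n' * (1 - P_T01 n'.+1 - P_T2_diag n'.+1)
  end.

(* N_j, for j >= 1 *)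
Definition N (N0 : R) (j : nat) : R := cohortN N0 j.-1.

Definition ET (j : nat) (k : 'I_K.+1) : \bar R :=
  (\sum_(0 <= t <oo) ((t%:R * lam j (Some k) t)%:E))%E.

(* Life years contributed at round j by an individual present at round j,
   in state x, whose time to death is t. *)
Definition contrib (j : nat) (x : state K) (t : nat) : R :=
  (if (2 <= j)%N then 2 else 0) +
  match x with
  | None => if t == 1%N then 1 else 0
  | Some _ => t%:R
  end.

(* Expected total life years E T_h: each of the N_j individuals present
   at round j contributes contrib j X T in expectation, where
   P(X = x, T = t) = mu(x) lam_x(t). *)
Definition ET_h (N0 : R) (J : nat) : \bar R :=
  (\sum_(1 <= j < J.+1)
     (N N0 j)%:E *
     \sum_(x : state K) \sum_(0 <= t <oo)
        ((contrib j x t * (mu j (h j) x * lam j x t))%:E))%E.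

End Model.

(* Main.v *)
Require Import Defs.
From HB Require Import structures.
From mathcomp Require Import all_boot all_order all_algebra.
From mathcomp Require Import all_classical all_reals all_analysis.
Import Order.TTheory GRing.Theory Num.Theory.
Local Open Scope ring_scope.
Local Open Scope ereal_scope.
Lemma sum_option (R : realType) K (F : option 'I_K.+1 -> \bar R) :
  \sum_(x : option 'I_K.+1) F x = F None + \sum_(k < K.+1) F (Some k).
Proof.
rewrite (bigD1 None) //=; congr (_ + _).
rewrite (reindex_omap Some id) /=; last by case.
by apply: eq_bigl => k; rewrite eqxx.
Qed.

Lemma one_term (R : realType) (g : nat -> R) : (forall t, (0 <= g t)%R) ->
  \sum_(0 <= t <oo) ((if t == 1%N then 1 else 0) * g t)%:E = (g 1%N)%:E.
Proof.
move=> g0.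
rewrite (@nneseries_split _ _ 0%N 2%N); last by move=> k _; rewrite lee_fin; case: ifP; rewrite ?mul1r ?mul0r.
rewrite eseries0; last by move=> i /= H _; case: eqP H => [->|]//; rewrite mul0r.
by rewrite adde0 big_nat_recr //= big_nat_recr //= big_nil add0e mul0r mul1r add0e.
Qed.

Lemma inner (R : realType) K (c : R) (m : option 'I_K.+1 -> R) (l : option 'I_K.+1 -> nat -> R) :
  (0 <= c)%R ->
  (forall x, 0 <= m x)%R -> (\sum_x m x = 1)%R -> (forall x t, 0 <= l x t)%R ->
  (forall x, \sum_(0 <= t <oo) (l x t)%:E = 1%:E) ->
  \sum_(x : option 'I_K.+1) \sum_(0 <= t <oo)
     (((c + match x with None => if t == 1%N then 1 else 0 | Some _ => t%:R end)
        * (m x * l x t))%:E)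
  = c%:E + ((l None 1%N * m None)%:E +
      \sum_(k < K.+1) (m (Some k))%:E * \sum_(0 <= t <oo) ((t%:R * l (Some k) t)%:E)).
Proof.
move=> c0 m0 m1 l0 l1.
have fge0 x t : (0 <= match x with None => if t == 1%N then 1 else 0 | Some _ => t%:R end :> R)%R.
  by case: x => [?|]; [|case: ifP].
have H : forall x, \sum_(0 <= t <oo)
     (((c + match x with None => if t == 1%N then 1 else 0 | Some _ => t%:R end)
        * (m x * l x t))%:E) = (c * m x)%:E +
     \sum_(0 <= t <oo) ((match x with None => if t == 1%N then 1 else 0 | Some _ => t%:R end)
        * (m x * l x t))%:E.
  move=> x.
  rewrite (eq_eseriesr (g := fun t => (c * m x)%:E * (l x t)%:E + (
     (match x with None => if t == 1%N then 1 else 0 | Some _ => t%:R end)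
        * (m x * l x t))%:E)); last first.
    by move=> t _; rewrite -EFinM -EFinD mulrDl mulrA.
  rewrite nneseriesD; last 2 first.
  - by move=> t _ _; rewrite -EFinM lee_fin !mulr_ge0.
  - by move=> t _ _; rewrite lee_fin !mulr_ge0.
  by rewrite nneseriesZl ?l1 ?mule1 // => t _; rewrite lee_fin.
rewrite (eq_bigr _ (fun x _ => H x)).
rewrite big_split /= sumEFin -mulr_sumr m1 mulr1; congr (_ + _).
rewrite sum_option; congr (_ + _).
  by rewrite (@one_term _ (fun t => m None * l None t)%R); [by rewrite mulrC | by move=> t; rewrite mulr_ge0].
apply: eq_bigr => k _.
rewrite -nneseriesZl; last by move=> t _; rewrite lee_fin mulr_ge0.
by apply: eq_eseriesr => t _; rewrite -EFinM mulrCA.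
Qed.

Local Close Scope ereal_scope.
Theorem proposition1 (R : realType) (J K : nat)
  (mu : nat -> bool -> option 'I_K.+1 -> R)
  (lam : nat -> option 'I_K.+1 -> nat -> R)
  (h : nat -> bool) (N0 : R) :
  0 <= N0 ->
  (forall j b x, (1 <= j <= J)%N -> 0 <= mu j b x) ->
  (forall j b, (1 <= j <= J)%N -> \sum_(x : option 'I_K.+1) mu j b x = 1) ->
  (forall j x t, (1 <= j <= J)%N -> 0 <= lam j x t) ->
  (forall j x, (1 <= j <= J)%N ->
     (\sum_(0 <= t <oo) (lam j x t)%:E = 1%:E)%E) ->
  ET_h mu lam h N0 J =
  (\sum_(2 <= j < J.+1) (2 * N mu lam h N0 j)%:E +
   \sum_(1 <= j < J.+1)
     (((lam j None 1%N * mu j (h j) None)%:E +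
       \sum_(k < K.+1) (mu j (h j) (Some k))%:E * ET lam j k) *
      (N mu lam h N0 j)%:E))%E.
Proof.
move=> N00 mu0 mu1 lam0 lam1.
rewrite /ET_h.
transitivity (\sum_(1 <= j < J.+1)
   ((N mu lam h N0 j * (if (2 <= j)%N then 2 else 0))%:E +
    ((lam j None 1%N * mu j (h j) None)%:E +
       \sum_(k < K.+1) (mu j (h j) (Some k))%:E * ET lam j k) *
      (N mu lam h N0 j)%:E))%E.
  apply: eq_big_nat => j /andP[j1 jJ].
  have jJ' : (1 <= j <= J)%N by rewrite j1 -ltnS jJ.
  have -> : (\sum_(x : state K) \sum_(0 <= t <oo)
        ((contrib R j x t * (mu j (h j) x * lam j x t))%:E) =
     (if (2 <= j)%N then 2 else 0)%:E + ((lam j None 1%N * mu j (h j) None)%:E +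
       \sum_(k < K.+1) (mu j (h j) (Some k))%:E * ET lam j k))%E.
    apply: (@inner R K (if (2 <= j)%N then 2 else 0) (mu j (h j)) (lam j)).
    - by case: ifP.
    - by move=> x; exact: mu0.
    - exact: mu1.
    - by move=> x t; exact: lam0.
    - by move=> x; exact: lam1.
  rewrite muleDr; [|by []|exact: fin_num_adde_defr].
  by rewrite -EFinM muleC.
rewrite big_split /=; congr (_ + _).
case: J {mu0 mu1 lam0 lam1} => [|J]; first by rewrite !big_geq.
rewrite big_ltn // /= mulr0 add0e.
apply: eq_big_nat => j /andP[j2 _].
by rewrite j2 mulrC.
Qed.
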